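(* Let $p>1$, $\alpha\in\mathbb{R}$, let $\psi_1$ and $h$ be as defined below. Then, as $s\to+\infty$: (i) $\displaystyle\frac{1}{\ln(\psi_1^2(s)+2)}=\frac{p-1}{2s}+\frac{\alpha(p-1)\ln s}{2s^2}+O\!\left(\frac1{s^2}\right)$; (ii) $\displaystyle h(s)=\frac1{p-1}\left[1-\frac{\alpha}{s}-\frac{\alpha^2\ln s}{s^2}\right]+O\!\left(\frac1{s^2}\right)$.
   Context: For $T>0$ let $\psi$ be the unique positive solution of $\psi'=\psi^p\ln^\alpha(\psi^2+2)$ with $\psi(t)\to+\infty$ as $t\to T$; set $\psi_1(s)=\psi(T-e^{-s})$ and $h(s)=e^{-s}\psi_1^{p-1}(s)\ln^\alpha(\psi_1^2(s)+2)$. *)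

(* Defs.v *)
From Stdlib Require Import Reals Lra.
Open Scope R_scope.

Definition psi1 (psi : R -> R) (T s : R) : R := psi (T - exp (- s)).

Definition hfun (p alpha : R) (psi : R -> R) (T s : R) : R :=
  exp (- s) * Rpower (psi1 psi T s) (p - 1)
    * Rpower (ln (psi1 psi T s ^ 2 + 2)) alpha.

Definition bigO_infty (f g : R -> R) : Prop :=
  exists C M : R, forall s : R, M < s -> Rabs (f s) <= C * Rabs (g s).

(* Main.v *)
Require Import Defs.
From Stdlib Require Import Reals Lra.
From Coquelicot Require Import Coquelicot.
Open Scope R_scope.
Definition Lf y := ln (y^2+2).
Definition Ef p al y := exp ((1-p)*ln y - al*ln (Lf y)).
Definition phi p al K' L := /(p-1) + (-2*al/(p-1)^2)/L + K'/L^2.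
Definition Phi p al K' y := Ef p al y * phi p al K' (Lf y).
Lemma Lf_pos y : 0 < Lf y.
Proof. unfold Lf. rewrite <- ln_1. apply ln_increasing; nra. Qed.
Lemma deriv_Phi p al K' y : 1 < p -> 0 < y ->
  derivable_pt_lim (Phi p al K') y
   (Ef p al y * (((1-p)/y - al*(2*y/(y^2+2))/Lf y)*phi p al K' (Lf y)
       + (-(-2*al/(p-1)^2)/(Lf y)^2 - 2*K'/(Lf y)^3)*(2*y/(y^2+2)))).
Proof.
  intros Hp Hy. apply is_derive_Reals.
  pose proof (Lf_pos y) as HL.
  unfold Phi, Ef, phi. unfold Lf in *.
  auto_derive.
  all: replace (y*(y*1)) with (y^2) by ring.
  all: try (repeat split; try lra; nra).
  replace ((1 - p) * ln y + - (al * ln (ln (y ^ 2 + 2)))) with ((1 - p) * ln y - al * ln (ln (y ^ 2 + 2))) by ring.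
  set (e := exp ((1 - p) * ln y - al * ln (ln (y ^ 2 + 2)))).
  set (L := ln (y^2+2)) in *.
  field. repeat split; try lra; nra.
Qed.
Lemma abs_prod_le x y M : 0 <= y <= M -> Rabs (x*y) <= Rabs x * M.
Proof. intros [H1 H2]. rewrite Rabs_mult, (Rabs_right y) by lra.
  apply Rmult_le_compat_l; [apply Rabs_pos|lra]. Qed.
Lemma poly_sign p al L k A B K :
  1 < p -> 0 <= k <= 2 -> 0 <= (2-k)*L^2 <= 16 -> 0 < A ->
  (p-1)*K = 2*Rabs(al+1)*Rabs B + 1 -> 0 <= K ->
  16*Rabs al*A + 2*Rabs(al+2)*K + 1 <= L ->
  al*A*((2-k)*L^2) - ((p-1)*K + (al+1)*k*B)*L - (al+2)*k*K <= 0 /\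
  al*A*((2-k)*L^2) - ((p-1)*(-K) + (al+1)*k*B)*L - (al+2)*k*(-K) >= 0.
Proof.
  intros Hp Hk He HA HK HK0 HL.
  assert (H1 : Rabs ((al*A)*((2-k)*L^2)) <= Rabs (al*A) * 16) by (apply abs_prod_le; lra).
  replace (Rabs (al*A)) with (Rabs al * A) in H1 by (rewrite Rabs_mult, (Rabs_right A) by lra; ring).
  assert (H2 : Rabs (((al+1)*B)*k) <= Rabs ((al+1)*B) * 2) by (apply abs_prod_le; lra).
  rewrite (Rabs_mult (al+1) B) in H2.
  assert (H3 : Rabs (((al+2)*K)*k) <= Rabs ((al+2)*K) * 2) by (apply abs_prod_le; lra).
  rewrite (Rabs_mult (al+2) K), (Rabs_right K) in H3 by lra.
  pose proof (Rle_abs ((al*A)*((2-k)*L^2))). pose proof (Rle_abs (-((al*A)*((2-k)*L^2)))).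
  rewrite Rabs_Ropp in H0.
  pose proof (Rle_abs (((al+1)*B)*k)). pose proof (Rle_abs (-(((al+1)*B)*k))).
  rewrite Rabs_Ropp in H5.
  pose proof (Rle_abs (((al+2)*K)*k)). pose proof (Rle_abs (-(((al+2)*K)*k))).
  rewrite Rabs_Ropp in H7.
  assert (L >= 1) by (pose proof (Rabs_pos al); pose proof (Rabs_pos (al+2)); nra).
  split.
  - assert (((p-1)*K + (al+1)*k*B) >= 1) by nra. nra.
  - assert (((p-1)*K - (al+1)*k*B) >= 1) by nra. nra.
Qed.
Lemma sq_le_exp v : 0 <= v -> v^2 <= 4 * exp v.
Proof.
  intros Hv. replace v with (v/2 + v/2) at 2 by field. rewrite exp_plus.
  assert (1 + v/2 <= exp (v/2)).
  { destruct (Req_dec (v/2) 0) as [E|E]. rewrite E, exp_0. lra.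
    left. apply exp_ineq1. auto. }
  nra.
Qed.
Lemma EF_eq p al y : 0 < y ->
  Ef p al y * (Rpower y p * Rpower (Lf y) al) = y.
Proof.
  intros Hy. unfold Ef, Rpower. rewrite <- !exp_plus.
  replace ((1 - p) * ln y - al * ln (Lf y) + (p * ln y + al * ln (Lf y))) with (ln y) by ring.
  apply exp_ln; auto.
Qed.
Definition KK p al := (2*Rabs(al+1)*Rabs (-2*al/(p-1)^2) + 1)/(p-1).
Definition L0 p al := 16*Rabs al*(/(p-1)) + 2*Rabs(al+2)*KK p al + 1.
Definition DPhi p al K' y := Ef p al y * (((1-p)/y - al*(2*y/(y^2+2))/Lf y)*phi p al K' (Lf y)
       + (-(-2*al/(p-1)^2)/(Lf y)^2 - 2*K'/(Lf y)^3)*(2*y/(y^2+2))).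
Lemma DF_sign p al y : 1 < p -> 0 < y -> L0 p al <= Lf y ->
  DPhi p al (KK p al) y * (Rpower y p * Rpower (Lf y) al) + 1 <= 0 /\
  DPhi p al (-KK p al) y * (Rpower y p * Rpower (Lf y) al) + 1 >= 0.
Proof.
  intros Hp Hy HL.
  pose proof (Lf_pos y) as HL0.
  assert (HA : 0 < /(p-1)) by (apply Rinv_0_lt_compat; lra).
  assert (HK0 : 0 <= KK p al).
  { unfold KK. apply Rmult_le_pos; [|left; auto].
    pose proof (Rabs_pos (al+1)); pose proof (Rabs_pos (-2*al/(p-1)^2)); nra. }
  assert (HKe : (p-1)*KK p al = 2*Rabs(al+1)*Rabs (-2*al/(p-1)^2) + 1) by (unfold KK; field; lra).
  set (k := 2*y^2/(y^2+2)).
  assert (Hk : 0 <= k <= 2).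
  { unfold k; split. apply Rmult_le_pos; [nra| left; apply Rinv_0_lt_compat; nra].
    apply Rmult_le_reg_r with (y^2+2). nra. unfold Rdiv. rewrite Rmult_assoc, Rinv_l by nra. nra. }
  assert (Hey : exp (Lf y) = y^2+2) by (unfold Lf; apply exp_ln; nra).
  assert (He : 0 <= (2-k)*Lf y^2 <= 16).
  { assert (E : 2 - k = 4/(y^2+2)) by (unfold k; field; nra).
    rewrite E. pose proof (sq_le_exp (Lf y) (Rlt_le _ _ HL0)). rewrite Hey in H.
    split. apply Rmult_le_pos. apply Rmult_le_pos; [lra|left; apply Rinv_0_lt_compat; nra]. nra.
    apply Rmult_le_reg_l with (y^2+2). nra.
    replace ((y ^ 2 + 2) * (4 / (y ^ 2 + 2) * Lf y ^ 2)) with (4 * Lf y^2) by (field; nra). nra. }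
  destruct (poly_sign p al (Lf y) k (/(p-1)) (-2*al/(p-1)^2) (KK p al) Hp Hk He HA HKe HK0 HL) as [S1 S2].
  assert (G : forall K', DPhi p al K' y * (Rpower y p * Rpower (Lf y) al) + 1 =
     (al*/(p-1)*((2-k)*Lf y^2) - ((p-1)*K' + (al+1)*k*(-2*al/(p-1)^2))*Lf y - (al+2)*k*K') / Lf y^3).
  { intros K'. unfold DPhi. rewrite Rmult_comm, <- Rmult_assoc, (Rmult_comm _ (Ef p al y)), EF_eq by auto.
    unfold k, phi. field. repeat split; try lra; nra. }
  assert (HL3 : 0 < Lf y ^3) by (apply pow_lt; auto).
  split; rewrite G.
  - apply Rmult_le_reg_r with (Lf y^3); auto. unfold Rdiv. rewrite Rmult_assoc, Rinv_l by lra. lra.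
  - apply Rle_ge, Rmult_le_reg_r with (Lf y^3); auto. unfold Rdiv. rewrite Rmult_assoc, Rinv_l by lra. lra.
Qed.
Lemma ln_le_xm1 x : 0 < x -> ln x <= x - 1.
Proof.
  intros Hx. pose proof (exp_ln x Hx) as E.
  destruct (Req_dec (ln x) 0) as [Z|Z]. rewrite Z in *. rewrite exp_0 in E. lra.
  pose proof (exp_ineq1 _ Z). lra.
Qed.
Lemma ln_le_lin c x : 0 < c -> 0 < x -> ln x <= c*x - ln c.
Proof.
  intros Hc Hx. pose proof (ln_le_xm1 (c*x)). rewrite ln_mult in H by auto.
  assert (0 < c*x) by nra. specialize (H H0). lra.
Qed.
Lemma ln3_lt_2 : ln 3 < 2.
Proof.
  rewrite <- (ln_exp 2). apply ln_increasing. lra.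
  pose proof (exp_ineq1 2). lra.
Qed.
Lemma one_le_Lf y : 1 <= y -> 1 <= Lf y.
Proof.
  intros Hy. unfold Lf. rewrite <- (ln_exp 1). apply ln_le. apply exp_pos.
  pose proof exp_le_3. nra.
Qed.
Lemma Lf_le y : 1 <= y -> Lf y <= 2*ln y + 2.
Proof.
  intros Hy. unfold Lf.
  assert (ln (y^2+2) <= ln (3*y^2)) by (apply ln_le; nra).
  rewrite ln_mult in H by nra. replace (y^2) with (y*y) in * by ring.
  rewrite ln_mult in H by lra. pose proof ln3_lt_2. lra.
Qed.
Lemma exp_le_mono x y : x <= y -> exp x <= exp y.
Proof. intros [H|H]. left; apply exp_increasing; auto. subst; lra. Qed.
Lemma Ef_small p al eps : 1 < p -> 0 < eps ->
  exists Y, 1 <= Y /\ forall y, Y <= y -> Ef p al y <= eps.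
Proof.
  intros Hp He.
  set (c := (p-1)/(4*(Rabs al+1))).
  assert (Hc : 0 < c) by (unfold c; pose proof (Rabs_pos al); apply Rdiv_lt_0_compat; lra).
  set (C0 := Rabs al * (2*c - ln c)).
  set (W := Rmax 0 (2*(C0 - ln eps)/(p-1))).
  exists (exp W). split.
  { rewrite <- exp_0. apply exp_le_mono. apply Rmax_l. }
  intros y Hy.
  assert (Hy1 : 1 <= y) by (rewrite <- exp_0 in *; pose proof (exp_le_mono 0 W (Rmax_l _ _)); lra).
  assert (Hw : W <= ln y) by (rewrite <- (ln_exp W); apply ln_le; [apply exp_pos|auto]).
  assert (Hw2 : 2*(C0 - ln eps)/(p-1) <= ln y) by (pose proof (Rmax_r 0 (2*(C0 - ln eps)/(p-1))); unfold W in Hw; lra).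
  assert (Hw0 : 0 <= ln y) by (pose proof (Rmax_l 0 (2*(C0 - ln eps)/(p-1))); unfold W in Hw; lra).
  pose proof (one_le_Lf y Hy1) as HL1. pose proof (Lf_le y Hy1) as HL2.
  assert (HlnL : 0 <= ln (Lf y)) by (rewrite <- ln_1; apply ln_le; lra).
  pose proof (ln_le_lin c (Lf y) Hc ltac:(lra)) as Hlin.
  assert (Hal : - al * ln (Lf y) <= Rabs al * ln (Lf y)).
  { pose proof (Rle_abs (-al)). rewrite Rabs_Ropp in H. nra. }
  assert (Hca : Rabs al * c * 2 <= (p-1)/2).
  { unfold c. pose proof (Rabs_pos al).
    replace (Rabs al * ((p - 1) / (4 * (Rabs al + 1))) * 2) with ((p-1)/2 * (Rabs al / (Rabs al + 1))) by (field; lra).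
    assert (Rabs al / (Rabs al + 1) <= 1).
    { apply Rmult_le_reg_r with (Rabs al + 1). lra. unfold Rdiv. rewrite Rmult_assoc, Rinv_l by lra. lra. }
    assert (0 <= (p-1)/2) by lra. nra. }
  assert (Hexp : (1-p)*ln y - al * ln (Lf y) <= ln eps).
  { assert (Rabs al * ln (Lf y) <= Rabs al * (c * (2*ln y + 2) - ln c)).
    { apply Rmult_le_compat_l. apply Rabs_pos. nra. }
    assert ((p-1)*(2*(C0 - ln eps)/(p-1)) <= (p-1)* ln y) by (apply Rmult_le_compat_l; lra).
    replace ((p-1)*(2*(C0 - ln eps)/(p-1))) with (2*(C0 - ln eps)) in H0 by (field; lra).
    unfold C0 in H0. pose proof (Rabs_pos al). nra. }
  unfold Ef. rewrite <- (exp_ln eps He). apply exp_le_mono. lra.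
Qed.
Lemma mono_nonincr f f' a b : a < b ->
  (forall c, a <= c <= b -> derivable_pt_lim f c (f' c)) ->
  (forall c, a < c < b -> f' c <= 0) -> f b <= f a.
Proof.
  intros Hab Hd Hs. destruct (MVT_cor2 f f' a b Hab Hd) as [c [E Hc]].
  specialize (Hs c Hc). nra.
Qed.
Lemma mono_nondecr f f' a b : a < b ->
  (forall c, a <= c <= b -> derivable_pt_lim f c (f' c)) ->
  (forall c, a < c < b -> f' c >= 0) -> f a <= f b.
Proof.
  intros Hab Hd Hs. destruct (MVT_cor2 f f' a b Hab Hd) as [c [E Hc]].
  specialize (Hs c Hc). nra.
Qed.
Lemma Lf_mono x y : 0 < x <= y -> Lf x <= Lf y.
Proof. intros H. unfold Lf. apply ln_le; nra. Qed.
Lemma psi_incr p al T t0 (psi : R -> R) :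
  (forall t, t0 < t < T ->
     derivable_pt_lim psi t (Rpower (psi t) p * Rpower (ln (psi t ^ 2 + 2)) al)) ->
  forall a b, t0 < a -> a < b -> b < T -> psi a < psi b.
Proof.
  intros Hd a b Ha Hab Hb.
  destruct (MVT_cor2 psi (fun t => Rpower (psi t) p * Rpower (ln (psi t ^ 2 + 2)) al) a b Hab)
    as [c [E Hc]].
  { intros c Hc. apply Hd. lra. }
  assert (0 < Rpower (psi c) p * Rpower (ln (psi c ^ 2 + 2)) al).
  { unfold Rpower. apply Rmult_lt_0_compat; apply exp_pos. }
  nra.
Qed.
Lemma phi_bound p al K K' L : 1 < p -> 1 <= L -> Rabs K' <= K ->
  Rabs (phi p al K' L - /(p-1) - (-2*al/(p-1)^2)/L) <= K/L^2 /\
  Rabs (phi p al K' L - /(p-1)) <= (Rabs (-2*al/(p-1)^2) + K)/L.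
Proof.
  intros Hp HL HK.
  assert (HL2 : 0 < L^2) by nra.
  split.
  - unfold phi. replace (/ (p - 1) + -2 * al / (p - 1) ^ 2 / L + K' / L ^ 2 - / (p - 1) - -2 * al / (p - 1) ^ 2 / L)
      with (K' / L^2) by ring.
    unfold Rdiv. rewrite Rabs_mult, (Rabs_right (/ L^2)). apply Rmult_le_compat_r; auto.
    left; apply Rinv_0_lt_compat; auto. left; apply Rinv_0_lt_compat; auto.
  - unfold phi. replace (/ (p - 1) + -2 * al / (p - 1) ^ 2 / L + K' / L ^ 2 - / (p - 1))
      with ((-2 * al / (p - 1) ^ 2 + K'/L) / L) by (field; lra).
    unfold Rdiv at 1. rewrite Rabs_mult, (Rabs_right (/ L)) by (left; apply Rinv_0_lt_compat; lra).
    apply Rmult_le_compat_r. left; apply Rinv_0_lt_compat; lra.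
    eapply Rle_trans. apply Rabs_triang. apply Rplus_le_compat_l.
    unfold Rdiv. rewrite Rabs_mult, (Rabs_right (/L)) by (left; apply Rinv_0_lt_compat; lra).
    assert (/L <= 1). { rewrite <- Rinv_1. apply Rinv_le_contravar; lra. }
    assert (0 < /L) by (apply Rinv_0_lt_compat; lra). pose proof (Rabs_pos K'). nra.
Qed.
Definition Bc p al := -2*al/(p-1)^2.
Definition Lbig p al := Rmax (L0 p al) (2*(Rabs (Bc p al) + KK p al)*(p-1)).
Lemma KK_pos p al : 1 < p -> 0 <= KK p al.
Proof. intros Hp. unfold KK. apply Rmult_le_pos; [|left; apply Rinv_0_lt_compat; lra].
    pose proof (Rabs_pos (al+1)); pose proof (Rabs_pos (-2*al/(p-1)^2)); nra. Qed.
Lemma L0_ge1 p al : 1 < p -> 1 <= L0 p al.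
Proof. intros Hp. unfold L0. pose proof (KK_pos p al Hp).
  assert (0 < /(p-1)) by (apply Rinv_0_lt_compat; lra).
  pose proof (Rabs_pos al); pose proof (Rabs_pos (al+2)).
  assert (0 <= 16 * Rabs al * / (p - 1)) by (apply Rmult_le_pos; lra). nra. Qed.
Lemma phi_near p al K' L : 1 < p -> Lbig p al <= L -> Rabs K' <= KK p al ->
  Rabs (phi p al K' L - /(p-1)) <= /(p-1)/2.
Proof.
  intros Hp HL HK. unfold Lbig in HL.
  pose proof (Rmax_l (L0 p al) (2*(Rabs (Bc p al) + KK p al)*(p-1))).
  pose proof (Rmax_r (L0 p al) (2*(Rabs (Bc p al) + KK p al)*(p-1))).
  pose proof (L0_ge1 p al Hp).
  destruct (phi_bound p al (KK p al) K' L Hp ltac:(lra) HK) as [_ H2].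
  eapply Rle_trans. apply H2.
  unfold Bc in *. set (M := Rabs (-2 * al / (p - 1) ^ 2) + KK p al) in *.
  apply Rmult_le_reg_r with (2*(p-1)*L). nra.
  replace (M / L * (2 * (p - 1) * L)) with (2*M*(p-1)) by (field; lra).
  replace (/ (p - 1) / 2 * (2 * (p - 1) * L)) with L by (field; lra). lra.
Qed.
Lemma Ef_pos p al y : 0 < Ef p al y.
Proof. apply exp_pos. Qed.
Lemma compare p al T t0 (psi : R -> R) :
  1 < p -> t0 < T ->
  (forall t, t0 < t < T ->
     derivable_pt_lim psi t (Rpower (psi t) p * Rpower (ln (psi t ^ 2 + 2)) al)) ->
  (forall t, t0 < t < T -> 0 < psi t) ->
  (forall M, exists d, 0 < d /\ forall t, T - d < t < T -> M < psi t) ->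
  forall t, t0 < t < T -> Lbig p al <= Lf (psi t) ->
  Phi p al (- KK p al) (psi t) <= T - t <= Phi p al (KK p al) (psi t).
Proof.
  intros Hp HT Hd Hpos Hbl t Ht HL.
  pose proof (KK_pos p al Hp) as HK0.
  assert (HL0 : L0 p al <= Lbig p al) by apply Rmax_l.
  assert (Hge : forall c, t <= c < T -> Lbig p al <= Lf (psi c) /\ psi t <= psi c).
  { intros c Hc. destruct (Req_dec c t) as [E|E]. subst; lra.
    assert (psi t < psi c) by (apply (psi_incr p al T t0 psi Hd); lra).
    split; [|lra]. eapply Rle_trans. apply HL. apply Lf_mono. split; [apply Hpos; lra| lra]. }
  assert (Hgd : forall K' c, t0 < c < T ->
     derivable_pt_lim (fun c => Phi p al K' (psi c) + c) c
       (DPhi p al K' (psi c) * (Rpower (psi c) p * Rpower (ln (psi c ^ 2 + 2)) al) + 1)).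
  { intros K' c Hc. apply derivable_pt_lim_plus; [|apply derivable_pt_lim_id].
    apply (derivable_pt_lim_comp psi (Phi p al K')). apply Hd; auto.
    apply deriv_Phi; auto. }
  assert (HA : 0 < /(p-1)) by (apply Rinv_0_lt_compat; lra).
  split.
  -
    assert (Hle : forall eps, 0 < eps -> Phi p al (- KK p al) (psi t) + t <= eps * (3/2*/(p-1)) + T).
    { intros eps He. destruct (Ef_small p al eps Hp He) as [Y [HY1 HY]].
      destruct (Hbl Y) as [d [Hd0 Hd1]].
      set (t' := T - Rmin d (T - t) / 2).
      assert (Hm1 : Rmin d (T-t) <= d) by apply Rmin_l.
      assert (Hm2 : Rmin d (T-t) <= T - t) by apply Rmin_r.
      assert (Hm3 : 0 < Rmin d (T-t)) by (apply Rmin_pos; lra).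
      assert (Ht' : t < t' < T) by (unfold t'; lra).
      assert (Hpt : Y < psi t') by (apply Hd1; unfold t'; lra).
      assert (S : Phi p al (- KK p al) (psi t) + t <= Phi p al (- KK p al) (psi t') + t').
      { apply (mono_nondecr (fun c => Phi p al (- KK p al) (psi c) + c) (fun c => DPhi p al (- KK p al) (psi c) * (Rpower (psi c) p * Rpower (ln (psi c ^ 2 + 2)) al) + 1) t t'). lra.
        intros c Hc. apply Hgd. lra.
        intros c Hc. destruct (Hge c ltac:(lra)) as [H1 H2].
        apply (DF_sign p al (psi c) Hp). apply Hpos; lra. lra. }
      destruct (Hge t' ltac:(lra)) as [H1 _].
      assert (Rabs (- KK p al) <= KK p al) by (rewrite Rabs_Ropp, Rabs_right; lra).
      pose proof (phi_near p al (- KK p al) _ Hp H1 H).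
      pose proof (Rle_abs (phi p al (- KK p al) (Lf (psi t')) - / (p - 1))).
      assert (Ef p al (psi t') <= eps) by (apply HY; lra).
      pose proof (Ef_pos p al (psi t')).
      unfold Phi in S.
      assert (Ef p al (psi t') * phi p al (- KK p al) (Lf (psi t')) <= eps * (3/2*/(p-1))).
      { pose proof (Rle_abs (-(phi p al (- KK p al) (Lf (psi t')) - / (p - 1)))). rewrite Rabs_Ropp in H5. apply Rmult_le_compat; try lra. }
      unfold Phi; lra. }
    destruct (Rle_or_lt (Phi p al (- KK p al) (psi t) + t) T) as [G|G]. lra.
    exfalso. set (x := Phi p al (- KK p al) (psi t) + t) in *.
    specialize (Hle ((x - T)/(3*/(p-1))) ltac:(apply Rdiv_lt_0_compat; lra)).
    replace ((x - T) / (3 * / (p - 1)) * (3 / 2 * / (p - 1))) with ((x-T)/2) in Hle by (field; lra).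
    lra.
  -
    assert (Hup : forall t', t < t' < T -> t' <= Phi p al (KK p al) (psi t) + t).
    { intros t' Ht'.
      assert (S : Phi p al (KK p al) (psi t') + t' <= Phi p al (KK p al) (psi t) + t).
      { apply (mono_nonincr (fun c => Phi p al (KK p al) (psi c) + c) (fun c => DPhi p al (KK p al) (psi c) * (Rpower (psi c) p * Rpower (ln (psi c ^ 2 + 2)) al) + 1) t t'). lra.
        intros c Hc. apply Hgd. lra.
        intros c Hc. destruct (Hge c ltac:(lra)) as [H1 H2].
        apply (DF_sign p al (psi c) Hp). apply Hpos; lra. lra. }
      destruct (Hge t' ltac:(lra)) as [H1 _].
      assert (Rabs (KK p al) <= KK p al) by (rewrite Rabs_right; lra).
      pose proof (phi_near p al (KK p al) _ Hp H1 H).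
      pose proof (Rle_abs (-(phi p al (KK p al) (Lf (psi t')) - / (p - 1)))).
      rewrite Rabs_Ropp in H2.
      pose proof (Ef_pos p al (psi t')).
      unfold Phi in S.
      assert (0 <= Ef p al (psi t') * phi p al (KK p al) (Lf (psi t'))) by (apply Rmult_le_pos; lra).
      unfold Phi; lra. }
    assert (HP : 0 <= Phi p al (KK p al) (psi t)).
    { destruct (Hge t ltac:(lra)) as [H1 _].
      assert (Rabs (KK p al) <= KK p al) by (rewrite Rabs_right; lra).
      pose proof (phi_near p al (KK p al) _ Hp H1 H).
      pose proof (Rle_abs (-(phi p al (KK p al) (Lf (psi t)) - / (p - 1)))).
      rewrite Rabs_Ropp in H2. pose proof (Ef_pos p al (psi t)). unfold Phi.
      apply Rmult_le_pos; lra. }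
    destruct (Rle_or_lt (T - t) (Phi p al (KK p al) (psi t))) as [G|G]. lra.
    exfalso. specialize (Hup ((Phi p al (KK p al) (psi t) + t + T)/2) ltac:(lra)). lra.
Qed.
Lemma abs_le_of a x : -a <= x <= a -> Rabs x <= a.
Proof. intros. apply Rabs_le. lra. Qed.
Lemma C_alg a al c0 R L r s : 0 < a -> 1 <= L -> 0 <= R -> Rabs r <= R/L ->
  s = a*L + al*ln L + c0 + r ->
  Rabs al * ln L + Rabs c0 + R <= a*L/2 ->
  a*L/2 <= s <= 3*a*L/2 /\
  Rabs (s^2/L - a*s - al*a*ln s) <=
    a*Rabs al*(Rabs (ln (a/2)) + Rabs (ln (3*a/2))) + a*Rabs c0 + a*R + 8*al^2 + 2*(Rabs c0+R)^2.
Proof.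
  intros Ha HL HR Hr Hs Hb.
  assert (HlnL : 0 <= ln L) by (rewrite <- ln_1; apply ln_le; lra).
  assert (HrR : Rabs r <= R).
  { eapply Rle_trans. apply Hr. unfold Rdiv. rewrite <- (Rmult_1_r R) at 2.
    apply Rmult_le_compat_l; auto. rewrite <- Rinv_1. apply Rinv_le_contravar; lra. }
  set (D := al*ln L + c0 + r).
  assert (HD : Rabs D <= Rabs al * ln L + Rabs c0 + R).
  { unfold D. eapply Rle_trans. apply Rabs_triang. eapply Rle_trans. apply Rplus_le_compat_r. apply Rabs_triang.
    rewrite Rabs_mult, (Rabs_right (ln L)) by lra. lra. }
  assert (Hs' : s = a*L + D) by (unfold D; lra).
  pose proof (Rle_abs D). pose proof (Rle_abs (-D)). rewrite Rabs_Ropp in H0.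
  assert (Hsb : a*L/2 <= s <= 3*a*L/2) by lra.
  split; auto.
  assert (Hs0 : 0 < s) by nra.
  assert (Hid : s^2/L - a*s - al*a*ln s = - a*al*ln (s/L) + a*c0 + a*r + D^2/L).
  { rewrite ln_div by lra. replace (s^2/L - a*s) with (a*D + D^2/L) by (rewrite Hs'; field; lra). unfold D at 1. ring. }
  rewrite Hid.
  assert (Hq1 : Rabs (ln (s/L)) <= Rabs (ln (a/2)) + Rabs (ln (3*a/2))).
  { assert (a/2 <= s/L <= 3*a/2).
    { assert (E : s = (s/L)*L) by (field; lra). set (q := s/L) in *. split; nra. }
    assert (ln (a/2) <= ln (s/L)) by (apply ln_le; lra).
    assert (ln (s/L) <= ln (3*a/2)) by (apply ln_le; lra).
    pose proof (Rle_abs (ln (a/2))). pose proof (Rle_abs (-ln (a/2))). rewrite Rabs_Ropp in H5.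
    pose proof (Rle_abs (ln (3*a/2))). pose proof (Rle_abs (-ln (3*a/2))). rewrite Rabs_Ropp in H7.
    apply abs_le_of. lra. }
  assert (HD2 : D^2/L <= 8*al^2 + 2*(Rabs c0+R)^2).
  { assert (D^2 <= 2*(Rabs al * ln L)^2 + 2*(Rabs c0 + R)^2).
    { rewrite <- (pow2_abs D).
      assert (0 <= Rabs D) by apply Rabs_pos.
      pose proof (Rabs_pos al). pose proof (Rabs_pos c0). assert (0 <= Rabs al * ln L) by nra.
      assert (Rabs D ^2 <= (Rabs al * ln L + Rabs c0 + R)^2) by nra.
      pose proof (pow2_ge_0 (Rabs al * ln L - (Rabs c0 + R))). nra. }
    assert ((ln L)^2 <= 4*L) by (rewrite <- (exp_ln L) at 2 by lra; apply sq_le_exp; auto).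
    apply Rmult_le_reg_r with L; [lra|]. unfold Rdiv. rewrite Rmult_assoc, Rinv_l by lra.
    rewrite Rmult_1_r.
    assert ((Rabs al * ln L)^2 = al^2 * (ln L)^2) by (rewrite Rpow_mult_distr, pow2_abs; auto).
    assert (0 <= (Rabs c0 + R)^2) by apply pow2_ge_0.
    assert (0 <= al^2) by apply pow2_ge_0. nra. }
  assert (HD20 : 0 <= D^2/L) by (apply Rmult_le_pos; [nra| left; apply Rinv_0_lt_compat; lra]).
  eapply Rle_trans. apply Rabs_triang. rewrite (Rabs_right (D^2/L)) by lra.
  eapply Rle_trans. apply Rplus_le_compat_r. apply Rabs_triang.
  eapply Rle_trans. apply Rplus_le_compat_r. apply Rplus_le_compat_r. apply Rabs_triang.
  rewrite !Rabs_mult. rewrite Rabs_Ropp, (Rabs_right a) by lra.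
  assert (Rabs al * Rabs (ln (s/L)) <= Rabs al * (Rabs (ln (a/2)) + Rabs (ln (3*a/2)))) by
    (apply Rmult_le_compat_l; [apply Rabs_pos|auto]).
  nra.
Qed.
Definition aa p := (p-1)/2.
Definition c0 p := ln (p-1).
Definition RR p al := 4*aa p + 2*(Rabs (Bc p al) + KK p al)*(p-1).
Definition cc p al := aa p/(4*(Rabs al+1)).
Definition L3 p al := 4*(Rabs al*Rabs (ln (cc p al)) + Rabs (c0 p) + RR p al)/aa p.
Definition CC1 p al := aa p*Rabs al*(Rabs (ln (aa p/2)) + Rabs (ln (3*aa p/2))) + aa p*Rabs (c0 p)
   + aa p*RR p al + 8*al^2 + 2*(Rabs (c0 p)+RR p al)^2.
Definition CC2 p al := KK p al*(9*aa p^2/4) + Rabs al * /(p-1)/aa p * CC1 p al.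
Definition Lthr p al := Rmax (Lbig p al) (Rmax 2 (L3 p al)).

Lemma point_bounds p al y th s : 1 < p -> 0 < y -> Lthr p al <= Lf y ->
  Rabs (th - /(p-1) - Bc p al / Lf y) <= KK p al / Lf y ^ 2 ->
  s = (p-1)*ln y + al * ln (Lf y) - ln th ->
  Rabs (/ Lf y - ((p-1)/(2*s) + al*(p-1)*ln s/(2*s^2))) <= CC1 p al * Rabs (/ s^2) /\
  Rabs (th - /(p-1)*(1 - al/s - al^2*ln s/s^2)) <= CC2 p al * Rabs (/ s^2).
Proof.
  intros Hp Hy HL Hth Hs.
  set (L := Lf y) in *.
  assert (HLb : Lbig p al <= L) by (eapply Rle_trans; [apply Rmax_l|apply HL]).
  assert (HL2 : 2 <= L) by (eapply Rle_trans; [|apply HL]; eapply Rle_trans; [|apply Rmax_r]; apply Rmax_l).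
  assert (HL3 : L3 p al <= L) by (eapply Rle_trans; [|apply HL]; eapply Rle_trans; [|apply Rmax_r]; apply Rmax_r).
  assert (HLb2 : 2*(Rabs (Bc p al) + KK p al)*(p-1) <= L) by (eapply Rle_trans; [apply Rmax_r|apply HLb]).
  pose proof (KK_pos p al Hp) as HK0.
  assert (Ha : 0 < aa p) by (unfold aa; lra).
  assert (HA : 0 < /(p-1)) by (apply Rinv_0_lt_compat; lra).
  assert (HLy : L <= y^2 + 1) by (unfold L, Lf; pose proof (ln_le_xm1 (y^2+2)); nra).
  assert (Hy2 : 1 <= y^2) by lra.
  assert (H2ln : 2*ln y = ln (y^2)) by (replace (y^2) with (y*y) by ring; rewrite ln_mult by lra; ring).
  assert (Hd1 : 0 <= L - 2*ln y <= 4/L).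
  { rewrite H2ln. unfold L, Lf. rewrite <- ln_div by nra.
    split. rewrite <- ln_1. apply ln_le. lra. apply Rmult_le_reg_r with (y^2); [lra|].
      unfold Rdiv. rewrite Rmult_assoc, Rinv_l by lra. lra.
    eapply Rle_trans. apply ln_le_xm1. apply Rdiv_lt_0_compat; lra.
    replace ((y ^ 2 + 2) / y ^ 2 - 1) with (2/y^2) by (field; lra).
    fold (Lf y). fold L.
    apply Rmult_le_reg_r with (y^2*L); [nra|].
    replace (2 / y ^ 2 * (y ^ 2 * L)) with (2*L) by (field; lra).
    replace (4 / L * (y ^ 2 * L)) with (4*y^2) by (field; lra). lra. }
  assert (HthA : Rabs (th - /(p-1)) <= (Rabs (Bc p al) + KK p al)/L).
  { replace (th - /(p-1)) with ((th - /(p-1) - Bc p al / L) + Bc p al / L) by ring.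
    eapply Rle_trans. apply Rabs_triang.
    unfold Rdiv. rewrite Rabs_mult, (Rabs_right (/L)) by (left; apply Rinv_0_lt_compat; lra).
    assert (KK p al / L^2 <= KK p al / L).
    { unfold Rdiv. apply Rmult_le_compat_l; auto. apply Rinv_le_contravar; nra. }
    unfold Rdiv in *. lra. }
  assert (HthA2 : Rabs (th - /(p-1)) <= /(p-1)/2).
  { eapply Rle_trans. apply HthA. apply Rmult_le_reg_r with (2*(p-1)*L). nra.
    replace ((Rabs (Bc p al) + KK p al) / L * (2 * (p - 1) * L)) with (2*(Rabs (Bc p al) + KK p al)*(p-1)) by (field; lra).
    replace (/ (p - 1) / 2 * (2 * (p - 1) * L)) with L by (field; lra). lra. }
  pose proof (Rle_abs (th - /(p-1))). pose proof (Rle_abs (-(th - /(p-1)))). rewrite Rabs_Ropp in H0.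
  assert (Hth0 : /(p-1)/2 <= th) by lra.
  assert (Hlnth : Rabs (ln th - ln (/(p-1))) <= 2*(p-1)*Rabs (th - /(p-1))).
  { apply abs_le_of. split.
    - assert (ln (/(p-1)) - ln th <= 2*(p-1)*Rabs (th - /(p-1))).
      { rewrite <- ln_div by lra. eapply Rle_trans. apply ln_le_xm1. apply Rdiv_lt_0_compat; lra.
        replace (/ (p - 1) / th - 1) with ((/(p-1) - th)/th) by (field; lra).
        apply Rmult_le_reg_r with th. lra.
        replace ((/ (p - 1) - th) / th * th) with (/(p-1) - th) by (field; lra).
        assert (2*(p-1)*th >= 1).
        { assert (2*(p-1)*(/(p-1)/2) = 1) by (field; lra).
          assert (2*(p-1)*(/(p-1)/2) <= 2*(p-1)*th) by (apply Rmult_le_compat_l; lra). lra. }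
        pose proof (Rabs_pos (th - /(p-1))). nra. }
      lra.
    - rewrite <- ln_div by lra. eapply Rle_trans. apply ln_le_xm1. apply Rdiv_lt_0_compat; lra.
      replace (th / / (p - 1) - 1) with ((p-1)*(th - /(p-1))) by (field; lra).
      pose proof (Rabs_pos (th - /(p-1))). nra. }
  rewrite ln_Rinv in Hlnth by lra.
  set (r := s - aa p * L - al * ln L - c0 p).
  assert (Hr : Rabs r <= RR p al / L).
  { assert (r = aa p * (2*ln y - L) - (ln th - - ln (p-1))) by (unfold r, aa, c0; rewrite Hs; field).
    rewrite H1. eapply Rle_trans. apply Rabs_triang. rewrite Rabs_Ropp, Rabs_mult, (Rabs_right (aa p)) by lra.
    assert (Rabs (2*ln y - L) <= 4/L) by (apply abs_le_of; lra).
    unfold RR. unfold Rdiv in *.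
    assert (2 * (p - 1) * Rabs (th - / (p - 1)) <= 2 * (p - 1) * ((Rabs (Bc p al) + KK p al) * / L)) by
      (apply Rmult_le_compat_l; [lra|auto]).
    assert (aa p * Rabs (2 * ln y - L) <= aa p * (4 * / L)) by (apply Rmult_le_compat_l; lra).
    nra. }
  assert (HRpos : 0 <= RR p al).
  { unfold RR. pose proof (Rabs_pos (Bc p al)). nra. }
  assert (Hb : Rabs al * ln L + Rabs (c0 p) + RR p al <= aa p * L/2).
  { assert (Hc : 0 < cc p al) by (unfold cc; pose proof (Rabs_pos al); apply Rdiv_lt_0_compat; lra).
    pose proof (ln_le_lin (cc p al) L Hc ltac:(lra)).
    assert (Rabs al * ln L <= Rabs al * (cc p al * L - ln (cc p al))) by (apply Rmult_le_compat_l; [apply Rabs_pos|auto]).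
    assert (Rabs al * cc p al <= aa p / 4).
    { unfold cc. pose proof (Rabs_pos al).
      replace (Rabs al * (aa p / (4 * (Rabs al + 1)))) with (aa p / 4 * (Rabs al / (Rabs al + 1))) by (field; lra).
      assert (Rabs al / (Rabs al + 1) <= 1).
      { apply Rmult_le_reg_r with (Rabs al + 1). lra. unfold Rdiv. rewrite Rmult_assoc, Rinv_l by lra. lra. }
      assert (0 <= aa p / 4) by lra. nra. }
    assert (- ln (cc p al) <= Rabs (ln (cc p al))) by (rewrite <- Rabs_Ropp; apply Rle_abs).
    assert (Rabs al * - ln (cc p al) <= Rabs al * Rabs (ln (cc p al))) by (apply Rmult_le_compat_l; [apply Rabs_pos|auto]).
    assert (HL3' : aa p * L3 p al <= aa p * L) by (apply Rmult_le_compat_l; lra).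
    unfold L3 in HL3'. replace (aa p * (4 * (Rabs al * Rabs (ln (cc p al)) + Rabs (c0 p) + RR p al) / aa p))
      with (4 * (Rabs al * Rabs (ln (cc p al)) + Rabs (c0 p) + RR p al)) in HL3' by (field; lra).
    assert (Rabs al * cc p al * L <= aa p/4 * L) by (apply Rmult_le_compat_r; lra).
    unfold Rdiv in *. lra. }
  destruct (C_alg (aa p) al (c0 p) (RR p al) L r s Ha ltac:(lra) HRpos Hr ltac:(unfold r; ring) Hb) as [Hsb HC].
  fold (CC1 p al) in HC.
  assert (Hs0 : 0 < s) by nra.
  assert (Hs2 : 0 < s^2) by nra.
  rewrite (Rabs_right (/ s^2)) by (left; apply Rinv_0_lt_compat; lra).
  assert (E1 : / L - ((p - 1) / (2 * s) + al * (p - 1) * ln s / (2 * s ^ 2)) =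
     (s ^ 2 / L - aa p * s - al * aa p * ln s) / s^2) by (unfold aa; field; lra).
  assert (HX : Rabs (/ L - ((p - 1) / (2 * s) + al * (p - 1) * ln s / (2 * s ^ 2))) <= CC1 p al * / s^2).
  { rewrite E1. unfold Rdiv at 1. rewrite Rabs_mult, (Rabs_right (/s^2)) by (left; apply Rinv_0_lt_compat; lra).
    apply Rmult_le_compat_r; [left; apply Rinv_0_lt_compat; lra| auto]. }
  split; auto.
  assert (E2 : th - / (p - 1) * (1 - al / s - al ^ 2 * ln s / s ^ 2) =
     (th - /(p-1) - Bc p al / L) - (al * /(p-1) / aa p) * (/ L - ((p - 1) / (2 * s) + al * (p - 1) * ln s / (2 * s ^ 2)))).
  { unfold Bc, aa. field. lra. }
  rewrite E2. eapply Rle_trans. apply Rabs_triang. rewrite Rabs_Ropp, Rabs_mult.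
  assert (HL2' : / L^2 <= (9*aa p^2/4) * / s^2).
  { assert (2*s/(3*aa p) <= L).
    { apply Rmult_le_reg_r with (3*aa p). lra. replace (2 * s / (3 * aa p) * (3 * aa p)) with (2*s) by (field; lra). lra. }
    assert (0 < 2*s/(3*aa p)) by (apply Rdiv_lt_0_compat; lra).
    assert (/L^2 <= /(2*s/(3*aa p))^2) by (apply Rinv_le_contravar; [nra| apply pow_incr; lra]).
    replace (/(2*s/(3*aa p))^2) with (9*aa p^2/4 * /s^2) in H3 by (field; lra). auto. }
  assert (Rabs (al * / (p - 1) / aa p) = Rabs al * / (p-1) / aa p).
  { unfold Rdiv. rewrite !Rabs_mult, (Rabs_right (/(p-1))), (Rabs_right (/aa p)); auto.
    left; apply Rinv_0_lt_compat; lra. lra. }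
  rewrite H1.
  assert (0 <= Rabs al * / (p - 1) / aa p).
  { unfold Rdiv. apply Rmult_le_pos. apply Rmult_le_pos. apply Rabs_pos. lra. left; apply Rinv_0_lt_compat; lra. }
  assert (Rabs al * / (p - 1) / aa p * Rabs (/ L - ((p - 1) / (2 * s) + al * (p - 1) * ln s / (2 * s ^ 2)))
     <= Rabs al * / (p - 1) / aa p * (CC1 p al * / s ^ 2)) by (apply Rmult_le_compat_l; auto).
  assert (KK p al / L^2 <= KK p al * ((9*aa p^2/4) * / s^2)) by (unfold Rdiv; apply Rmult_le_compat_l; auto).
  unfold CC2. unfold L in *. lra.
Qed.

Lemma Lthr_pos p al : 1 < p -> 2 <= Lthr p al.
Proof. intros. unfold Lthr. eapply Rle_trans; [|apply Rmax_r]. apply Rmax_l. Qed.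

Theorem lemmaA5 (p alpha T t0 : R) (psi : R -> R) :
  1 < p -> 0 < T -> t0 < T ->
  (forall t, t0 < t < T -> 0 < psi t) ->
  (forall t, t0 < t < T ->
     derivable_pt_lim psi t (Rpower (psi t) p * Rpower (ln (psi t ^ 2 + 2)) alpha)) ->
  (forall M, exists d, 0 < d /\ forall t, T - d < t < T -> M < psi t) ->
  bigO_infty
    (fun s => / ln (psi1 psi T s ^ 2 + 2)
              - ((p - 1) / (2 * s) + alpha * (p - 1) * ln s / (2 * s ^ 2)))
    (fun s => / s ^ 2)
  /\
  bigO_infty
    (fun s => hfun p alpha psi T s
              - / (p - 1) * (1 - alpha / s - alpha ^ 2 * ln s / s ^ 2))
    (fun s => / s ^ 2).
Proof.
  intros Hp HT Ht0 Hpos Hd Hbl.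
  set (Lt := Lthr p alpha).
  pose proof (Lthr_pos p alpha Hp) as HLt.
  set (Y0 := exp Lt).
  assert (HY0 : 1 <= Y0) by (unfold Y0; rewrite <- exp_0; apply exp_le_mono; fold Lt in HLt; lra).
  assert (HLY0 : Lt <= Lf Y0).
  { unfold Lf. rewrite <- (ln_exp Lt) at 1. apply ln_le. apply exp_pos. fold Y0. nra. }
  destruct (Hbl Y0) as [d [Hd0 Hd1]].
  set (m := Rmin d (T - t0)).
  assert (Hm : 0 < m) by (apply Rmin_pos; lra).
  assert (Hm1 : m <= d) by apply Rmin_l.
  assert (Hm2 : m <= T - t0) by apply Rmin_r.
  assert (KEY : forall s, - ln m < s ->
    Rabs (/ ln (psi1 psi T s ^ 2 + 2) - ((p - 1) / (2 * s) + alpha * (p - 1) * ln s / (2 * s ^ 2)))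
       <= CC1 p alpha * Rabs (/ s^2) /\
    Rabs (hfun p alpha psi T s - / (p - 1) * (1 - alpha / s - alpha ^ 2 * ln s / s ^ 2))
       <= CC2 p alpha * Rabs (/ s^2)).
  { intros s Hs.
    assert (He : exp (-s) < m).
    { rewrite <- (exp_ln m Hm). apply exp_increasing. lra. }
    pose proof (exp_pos (-s)) as He0.
    set (t := T - exp (-s)).
    assert (Ht : t0 < t < T) by (unfold t; lra).
    assert (Hyt : Y0 < psi t) by (apply Hd1; unfold t; lra).
    set (y := psi t) in *.
    assert (Hy : 0 < y) by lra.
    assert (HL : Lt <= Lf y) by (eapply Rle_trans; [apply HLY0| apply Lf_mono; lra]).
    assert (HLb : Lbig p alpha <= Lf y) by (eapply Rle_trans; [apply Rmax_l| apply HL]).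
    destruct (compare p alpha T t0 psi Hp Ht0 Hd Hpos Hbl t Ht HLb) as [Lo Up].
    fold y in Lo, Up.
    replace (T - t) with (exp (-s)) in Lo, Up by (unfold t; ring).
    set (E := Ef p alpha y) in *.
    assert (HE : 0 < E) by apply Ef_pos.
    set (th := exp (-s) / E).
    unfold Phi in Lo, Up. fold E in Lo, Up.
    set (L := Lf y) in *.
    assert (HL1 : 1 <= L) by (fold Lt in HLt; lra).
    assert (Hth : Rabs (th - /(p-1) - Bc p alpha / L) <= KK p alpha / L ^ 2).
    { assert (phi p alpha (- KK p alpha) L <= th <= phi p alpha (KK p alpha) L).
      { unfold th. split.
        - apply Rmult_le_reg_r with E; auto. unfold Rdiv. rewrite Rmult_assoc, Rinv_l by lra. lra.
        - apply Rmult_le_reg_r with E; auto. unfold Rdiv. rewrite Rmult_assoc, Rinv_l by lra. lra. }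
      unfold phi, Bc in *. apply abs_le_of. unfold Rdiv in *. lra. }
    assert (Hsth : s = (p-1)*ln y + alpha * ln L - ln th).
    { unfold th. rewrite ln_div by auto. rewrite ln_exp. unfold E, Ef. rewrite ln_exp. fold L. ring. }
    destruct (point_bounds p alpha y th s Hp Hy HL Hth Hsth) as [R1 R2].
    split.
    - unfold psi1. fold t. fold y. exact R1.
    - assert (hfun p alpha psi T s = th).
      { unfold hfun, psi1. fold t. fold y. fold L. unfold th, E, Ef, Rpower. fold L.
        unfold Rdiv. rewrite <- exp_Ropp.
        rewrite !Rmult_assoc. f_equal. rewrite <- !exp_plus. f_equal. unfold L, Lf. ring. }
      rewrite H. exact R2. }
  split.
  - exists (CC1 p alpha), (- ln m). intros s Hs. apply (KEY s Hs).
  - exists (CC2 p alpha), (- ln m). intros s Hs. apply (KEY s Hs).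
Qed.
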